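(* Let $d\ge1$, $G\in\mathrm{GL}_{1+d}(\mathbb{R})$, and let $g(\xi)=\boldsymbol{\pi}({}^tG\,\sigma(\xi))$ for $\xi\in\mathbb{R}^d$, $\|\xi\|<1$. Then in a neighbourhood of $\xi=0$, the differential $dg(\xi)$ (equivalently the mixed Hessian $\partial_{\tilde x}\partial_\xi\phi$ of the phase $\phi(\tilde x,\xi)=\langle\tilde x,g(\xi)\rangle_d+\langle\gamma,\sigma(\xi)\rangle$, $\gamma\in\mathbb{R}^{1+d}$) is non-degenerate if and only if the hyperplanes $P_0=\{0\}\times\mathbb{R}^d$ and $GP_0$ are not mutually perpendicular, i.e. if and only if $\langle e_0,G^{-1}e_0\rangle\neq 0$.
   Context: $\mathbb{R}^{1+d}$ has coordinates $(x_0,\dots,x_d)$, canonical basis $e_0,\dots,e_d$, Euclidean scalar product $\langle\cdot,\cdot\rangle$; $\langle\cdot,\cdot\rangle_d$ is the Euclidean scalar product on $\mathbb{R}^d$. $\sigma(\xi)=(\sqrt{1-\|\xi\|^2},\xi)$ for $\|\xi\|<1$. $\boldsymbol{\pi}:\mathbb{R}^{1+d}\to\mathbb{R}^d$ is the linear projection $(\xi_0,\xi_1,\dots,\xi_d)\mapsto(\xi_1,\dots,\xi_d)$. ${}^tG$ is the transpose of $G$. *)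

(* Defs.v *)
From HB Require Import structures.
From mathcomp Require Import all_boot all_order all_algebra.
From mathcomp Require Import all_classical all_reals all_analysis.
Set Implicit Arguments. Unset Strict Implicit. Unset Printing Implicit Defensive.
Import Order.TTheory GRing.Theory Num.Theory.
Import numFieldNormedType.Exports.
Local Open Scope ring_scope.

(* Vectors of R^{1+d} are row vectors 'rV[R]_(1 + d); coordinate 0 is x_0. *)

(* Squared Euclidean norm on R^d (the library norm on 'rV is the max norm). *)
Definition sqnorm (R : realType) (d : nat) (xi : 'rV[R]_d) : R :=
  \sum_(i < d) xi ord0 i ^+ 2.

Definition sigma (R : realType) (d : nat) (xi : 'rV[R]_d) : 'rV[R]_(1 + d) :=
  row_mx (Num.sqrt (1 - sqnorm xi))%:M xi.

Definition proj (R : realType) (d : nat) (x : 'rV[R]_(1 + d)) : 'rV[R]_d :=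
  rsubmx x.

(* g(xi) = pi ( tG sigma(xi) ); for a row vector v, (tG v^T)^T = v *m G *)
Definition gmap (R : realType) (d : nat) (G : 'M[R]_(1 + d)) (xi : 'rV[R]_d)
  : 'rV[R]_d := proj (sigma xi *m G).

(* Main.v *)
From HB Require Import structures.
From mathcomp Require Import all_boot all_order all_algebra.
From mathcomp Require Import all_classical all_reals all_analysis.
From mathcomp Require Import ring lra.
Require Import Defs.
Import Order.TTheory GRing.Theory Num.Theory.
Import numFieldNormedType.Exports.
Set Implicit Arguments. Unset Strict Implicit. Unset Printing Implicit Defensive.
Local Open Scope ring_scope.

Section Helpers.
Variable R : realType.

Lemma is_diff_sum (V W : normedModType R) k (F dF : 'I_k -> V -> W) x :
  (forall i, is_diff x (F i) (dF i)) -> is_diff x (\sum_i F i) (\sum_i dF i).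
Proof.
move=> H; elim/big_ind2: _ => //.
  exact: is_diff_cst.
by move=> f1 df1 f2 df2 H1 H2; apply: is_diffD.
Qed.

Lemma is_diffZl (V W : normedModType R) (k dk : V -> R) (c : W) x :
  is_diff x k dk -> is_diff x (fun z => k z *: c) (fun z => dk z *: c).
Proof.
move=> [dk1 dk2]; apply: DiffDef; first exact: differentiableZl.
by rewrite diffZl // dk2.
Qed.

Lemma is_diff_coord m n (i : 'I_m) (j : 'I_n) (x : 'M[R]_(m, n)) :
  is_diff x (fun M : 'M[R]_(m, n) => M i j) (fun M => M i j).
Proof.
have @f : {linear 'M[R]_(m, n) -> R}.
  by exists (fun N : 'M[R]_(_, _) => N i j); do 2![eexists]; do ?[constructor];
     rewrite ?mxE// => ? *; rewrite ?mxE//; move=> ?; rewrite !mxE.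
rewrite (_ : (fun _ => _) = f) //.
apply: DiffDef; first exact/linear_differentiable/coord_continuous.
by rewrite diff_lin //; apply: coord_continuous.
Qed.

Lemma is_diff_mulmxr m p (M : 'M[R]_(m, p)) (x : 'rV[R]_m) :
  is_diff x (fun h : 'rV[R]_m => h *m M) (fun h => h *m M).
Proof.
have E : (fun h : 'rV[R]_m => h *m M) = \sum_i (fun h : 'rV[R]_m => h 0 i *: row i M).
  by apply/funext => h; rewrite mulmx_sum_row fct_sumE.
rewrite E; apply: is_diff_sum => i; apply: is_diffZl; exact: is_diff_coord.
Qed.


Lemma is_diff_sqrt (y : R) : 0 < y ->
  is_diff y (@Num.sqrt R) (fun h => h *: (2 * Num.sqrt y)^-1).
Proof.
move=> y0; have [H1 H2] := is_derive1_sqrt y0.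
have dy : differentiable (@Num.sqrt R) y by apply/derivable1_diffP.
apply: DiffDef => //; rewrite diff1E // derive1E H2 //.
Qed.


Lemma is_diff_q d (xi : 'rV[R]_d) :
  is_diff xi (fun z => 1 - sqnorm z) (fun h => - (2 * \sum_i xi 0 i * h 0 i)).
Proof.
have -> : (fun z => 1 - sqnorm z) = cst 1 - \sum_i ((fun z : 'rV[R]_d => z 0 i) ^+ 2).
  by apply/funext => z /=; rewrite /sqnorm fct_sumE.
have H := is_diffB (is_diff_cst (1:R) xi)
  (is_diff_sum (fun i => is_diffX 1 (is_diff_coord 0 i xi))).
apply: (is_diff_eq H).
apply/funext => h /=; rewrite fct_sumE /= sub0r; congr (- _).
rewrite mulr_sumr; apply: eq_bigr => i _ /=.
by rewrite expr1 /= mulrA.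
Qed.

Lemma is_diff_s d (xi : 'rV[R]_d) : 0 < 1 - sqnorm xi ->
  is_diff xi (fun z => Num.sqrt (1 - sqnorm z))
    (fun h => - ((Num.sqrt (1 - sqnorm xi))^-1 * \sum_i xi 0 i * h 0 i)).
Proof.
move=> q0.
have := is_diff_comp (is_diff_q xi) (is_diff_sqrt q0).
move=> H; apply: (is_diff_eq H).
apply/funext => h /=.
have s0 : Num.sqrt (1 - sqnorm xi) != 0 by rewrite sqrtr_eq0 -ltNge.
rewrite /GRing.scale /=; field; rewrite s0 /=; lra.
Qed.

End Helpers.
Lemma det_rank1 (R : fieldType) d (D : 'M[R]_d) (u : 'cV_d) (b : 'rV_d) :
  D \in unitmx ->
  \det (D + u *m b) = \det D * (1 + (b *m invmx D *m u) 0 0).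
Proof.
move=> uD.
pose M := block_mx (1%:M : 'M[R]_1) b (- u) D.
have E1 : M = block_mx 1%:M 0 (- u) 1%:M *m block_mx 1%:M b 0 (D + u *m b).
  rewrite mulmx_block !mul1mx !mul0mx !mulmx1 !addr0 ?add0r.
  by rewrite mulNmx addrC addrK.
have E2 : M = block_mx (1%:M + b *m invmx D *m u) b 0 D
              *m block_mx 1%:M 0 (- (invmx D *m u)) 1%:M.
  rewrite mulmx_block !mulmx1 !mulmx0 ?mul0mx ?add0r ?addr0.
  by rewrite !mulmxN (mulKVmx uD) mulmxA addrK.
have := congr1 determinant E2; rewrite E1 !det_mulmx det_ublock det_lblock.
rewrite !det1 ?mul1r ?mulr1 => ->.
rewrite det_ublock det_lblock !det1 mulr1 det_mx11 mulrC !mxE.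
by rewrite eqxx mul1r mulrC.
Qed.

Lemma inv00 (R : fieldType) n (G : 'M[R]_(1 + n.+1)) : G \in unitmx ->
  (invmx G 0 0 != 0) = (\det (drsubmx G) != 0).
Proof.
move=> uG; rewrite /invmx uG !mxE /cofactor.
set M := row' _ _.
have -> : M = drsubmx G.
  by apply/matrixP => i j; rewrite !mxE; congr (G _ _); apply: val_inj.
rewrite addn0 expr0 mul1r mulf_eq0 negb_or invr_eq0.
by move: uG; rewrite unitmxE unitfE => ->.
Qed.

Section Main.
Variable R : realType.

Lemma sum_delta d (f : 'I_d -> R) (i : 'I_d) :
  \sum_k ('e_i : 'rV[R]_d) 0 k * f k = f i.
Proof.
rewrite (bigD1 i) //= big1 => [|k /negbTE nk]; rewrite !mxE ?eqxx ?nk ?mul0r //.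
by rewrite mul1r addr0.
Qed.

Lemma sum_deltar d (f : 'I_d -> R) (i : 'I_d) :
  \sum_k f k * ('e_i : 'rV[R]_d) 0 k = f i.
Proof. by rewrite -(sum_delta f i); apply: eq_bigr => k _; rewrite mulrC. Qed.

Lemma gmapE d (G : 'M[R]_(1 + d)) :
  gmap G = (fun z => Num.sqrt (1 - sqnorm z) *: ursubmx G) + (fun h => h *m drsubmx G).
Proof.
apply/funext => z; rewrite /gmap /proj /sigma -{1}(submxK G) mul_row_block row_mxKr.
by rewrite mul_scalar_mx.
Qed.

Lemma is_diff_gmap d (G : 'M[R]_(1 + d)) xi : 0 < 1 - sqnorm xi ->
  is_diff xi (gmap G) (fun h => - ((Num.sqrt (1 - sqnorm xi))^-1 * \sum_i xi 0 i * h 0 i)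
     *: ursubmx G + h *m drsubmx G).
Proof.
move=> q0; rewrite gmapE.
exact: (is_diffD (is_diffZl (ursubmx G) (is_diff_s q0)) (is_diff_mulmxr (drsubmx G) xi)).
Qed.

Lemma J_gmap d (G : 'M[R]_(1 + d)) xi : 0 < 1 - sqnorm xi ->
  'J (gmap G) xi = drsubmx G + (- (Num.sqrt (1 - sqnorm xi))^-1 *: xi^T) *m ursubmx G.
Proof.
move=> q0; rewrite /jacobian (@diff_val _ _ _ _ _ _ _ (is_diff_gmap G q0)).
apply/matrixP => i j; rewrite !mxE big_ord1 !mxE.
rewrite sum_delta sum_deltar; rewrite addrC; congr (_ + _).
  by rewrite /drsubmx /rsubmx /dsubmx !mxE.
by rewrite !mulNr.
Qed.
End Main.


Lemma isd_ex (R : realType) (V W : normedModType R) (f df : V -> W) x :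
  is_diff x f df -> differentiable f x.
Proof. by case. Qed.

Lemma sqnorm0 (R : realType) d : sqnorm (0 : 'rV[R]_d) = 0.
Proof. by rewrite /sqnorm big1 // => i _; rewrite mxE expr0n. Qed.

Unset Implicit Arguments.
Theorem lemma5p4 (R : realType) (n : nat) (G : 'M[R]_(1 + n.+1)) :
  G \in unitmx ->
  ((\forall xi \near (0 : 'rV[R]_n.+1),
      differentiable (gmap G) xi /\ \det ('J (gmap G) xi) != 0)
   <-> invmx G ord0 ord0 != 0).
Proof.
move=> uG; rewrite (inv00 uG).
have q00 : 0 < 1 - sqnorm (0 : 'rV[R]_n.+1) by rewrite sqnorm0 subr0 ltr01.
split.
  move=> /nbhs_singleton [_]; rewrite J_gmap //.
  by rewrite trmx0 scaler0 mul0mx addr0.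
move=> HD.
have uD : drsubmx G \in unitmx by rewrite unitmxE unitfE.
set s := fun z : 'rV[R]_n.+1 => Num.sqrt (1 - sqnorm z).
set K := (ursubmx G *m invmx (drsubmx G))^T.
set w := (fun z : 'rV[R]_n.+1 => (z *m K) 0 0) : 'rV[R]_n.+1 -> R.
have cs : {for 0, continuous s}.
  apply: differentiable_continuous; exact: (isd_ex (is_diff_s q00)).
have cw : {for 0, continuous w}.
  apply: differentiable_continuous.
  exact: (isd_ex (is_diff_comp (is_diff_mulmxr K 0) (is_diff_coord 0 0 _))).
have s0 : s 0 = 1 by rewrite /s sqnorm0 subr0 sqrtr1.
have w0 : w 0 = 0 by rewrite /w mul0mx mxE.
have Ns : \forall x \near (0 : 'rV[R]_n.+1), 1/2 < s x.
  by apply: (cvgr_gt (s 0) cs); rewrite s0; lra.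
have Nw : \forall x \near (0 : 'rV[R]_n.+1), `|w 0 - w x| < 1/2.
  have h2 : 0 < 1/2 :> R by lra.
  exact: (@cvgr_dist_lt _ _ _ _ _ w (w 0) cw (1/2) h2).
rewrite w0 in Nw.
near=> xi.
have sgt : 1/2 < s xi by near: xi; exact: Ns.
have wlt : `|w xi| < 1/2.
  by rewrite -normrN -sub0r; near: xi; exact: Nw.
have q0 : 0 < 1 - sqnorm xi.
  by rewrite -sqrtr_gt0; apply: lt_trans sgt; lra.
split; first exact: (isd_ex (is_diff_gmap G q0)).
rewrite J_gmap // det_rank1 // mulf_neq0 //.
rewrite -scalemxAr mxE.
have -> : (ursubmx G *m invmx (drsubmx G) *m xi^T) 0 0 = w xi.
  rewrite /w /K; have := trmx_mul (ursubmx G *m invmx (drsubmx G)) xi^T.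
  by rewrite trmxK => <-; rewrite [in RHS]mxE.
rewrite -/(s xi).
have spos : 0 < s xi by apply: lt_trans sgt; lra.
have hw : (s xi)^-1 * w xi < 1.
  rewrite mulrC ltr_pdivrMr // mul1r; apply: le_lt_trans (ler_norm _) _; lra.
by rewrite mulNr gt_eqF // subr_gt0.
Unshelve. all: by end_near.
Qed.
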